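(* Let $r\in\{0,1\}$, $n\ge1$ and $\lambda\in\mathcal P_r(n)$. Then \[ I_\lambda=\sum_{D}\mathrm{sign}(D), \] where the sum is over all standard domino tableaux $D$ of shape $\lambda$.
   Context: Partitions are identified with Young diagrams in English notation. A domino is a set of two cells sharing an edge. $\delta_0=\emptyset$, $\delta_1=(1)$; $\mathcal P_r(n)$ is the set of partitions with 2-core $\delta_r$ (the 2-core is obtained by repeatedly removing dominoes while staying a partition) and size $|\delta_r|+2n$. A standard domino tableau of shape $\lambda\in\mathcal P_r(n)$ is a chain $\delta_r=\lambda^0\subset\cdots\subset\lambda^n=\lambda$ with each $\lambda^k/\lambda^{k-1}$ a domino (the domino with value $k$). For a standard Young tableau $T$ its reading word reads the rows from top to bottom, each from left to right, and $\mathrm{sign}(T)$ is the sign of this permutation; $I_\lambda=\sum_T\mathrm{sign}(T)$ over all standard Young tableaux of shape $\lambda$. For a standard domino tableau $D$, $T(D)$ is the standard Young tableau obtained (for $r=0$) by filling the domino with value $k$ with $2k-1,2k$, or (for $r=1$) by putting $1$ in the core cell and filling the domino with value $k$ with $2k,2k+1$, the smaller number in the left (horizontal domino) or upper (vertical domino) cell; $\mathrm{sign}(D)=\mathrm{sign}(T(D))$. *)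

(* Defs.v *)
From mathcomp Require Import all_boot all_order all_algebra all_fingroup.
Unset Printing Implicit Defensive.
Import GRing.Theory.
Local Open Scope ring_scope.

(* Partitions are weakly decreasing sequences of positive naturals
   (row lengths, English notation: row i has cells (i,0),...,(i,lam_i - 1)). *)
Definition is_partition (lam : seq nat) : bool :=
  sorted geq lam && all (fun x => 0 < x)%N lam.

Definition delta (r : nat) : seq nat := if r == 0%N then [::] else [:: 1%N].

(* Cells of a box large enough to contain every diagram of size <= N. *)
Definition cell (N : nat) := ('I_N.+1 * 'I_N.+1)%type.

Definition diag (N : nat) (lam : seq nat) : {set cell N} :=
  [set c : cell N | (c.2 < nth 0 lam c.1)%N].

Definition young (N : nat) (A : {set cell N}) : bool :=
  [forall c in A, forall d : cell N,
     ((d.1 <= c.1)%N && (d.2 <= c.2)%N) ==> (d \in A)].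

Definition adjacent (N : nat) (c d : cell N) : bool :=
  ((c.1 == d.1 :> nat) && ((c.2.+1 == d.2 :> nat) || (d.2.+1 == c.2 :> nat)))
  || ((c.2 == d.2 :> nat) && ((c.1.+1 == d.1 :> nat) || (d.1.+1 == c.1 :> nat))).

Definition is_domino (N : nat) (A : {set cell N}) : bool :=
  [exists c : cell N, exists d : cell N, adjacent N c d && (A == [set c; d])].

(* A standard domino tableau of shape lam with m dominoes and core delta_r:
   a chain delta_r = D 0 subset ... subset D m = lam of Young diagrams,
   each D k / D (k-1) a domino (the domino with value k). *)
Definition is_domino_tab (r m : nat) (lam : seq nat)
    (D : {ffun 'I_m.+1 -> {set cell (sumn lam)}}) : bool :=
  [forall k, young _ (D k)]
  && (D ord0 == diag (sumn lam) (delta r))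
  && (D ord_max == diag (sumn lam) lam)
  && [forall k : 'I_m, (D (inord k) \subset D (inord k.+1))
                       && is_domino _ (D (inord k.+1) :\: D (inord k))].

(* The set P_r(n): 2-core delta_r and size |delta_r| + 2n.  "lam has 2-core
   delta_r" is expressed as: lam is reached from delta_r by successively adding
   dominoes (delta_r admits no removable domino). *)
Definition in_Pr (r n : nat) (lam : seq nat) : Prop :=
  is_partition lam
  /\ (exists m (D : {ffun 'I_m.+1 -> {set cell (sumn lam)}}), is_domino_tab r m lam D)
  /\ sumn lam = (sumn (delta r) + 2 * n)%N.

(* The word (s(0)+1, ..., s(N-1)+1) of a permutation of 'I_N, i.e. a
   permutation of {1,...,N} in one-line notation. *)
Definition pword (N : nat) (s : 'S_N) : seq nat := [seq (s i).+1 | i <- enum 'I_N].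

(* sign of a word that is a permutation of {1..N} (0 otherwise, never used) *)
Definition sign_word (N : nat) (w : seq nat) : int :=
  if [pick s : 'S_N | pword N s == w] is Some s then (-1) ^+ odd_perm s else 0.

Definition is_standard (lam : seq nat) (t : seq (seq nat)) : bool :=
  all (fun i => sorted ltn (nth [::] t i)) (iota 0 (size lam))
  && all (fun i => all (fun j => (nth 0 (nth [::] t i) j < nth 0 (nth [::] t i.+1) j)%N)
                       (iota 0 (nth 0 lam i.+1)))
         (iota 0 (size lam)).

(* A standard Young tableau of shape lam is determined by its reading word,
   a permutation of {1,..,|lam|}; the tableau is the word cut into rows of
   lengths lam.  I_lam = sum over SYT T of sign(T). *)
Definition I_lam (lam : seq nat) : int :=
  \sum_(s : 'S_(sumn lam) | is_standard lam (reshape lam (pword _ s))) (-1) ^+ odd_perm s.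

Definition dom_entry (r m : nat) (lam : seq nat)
    (D : {ffun 'I_m.+1 -> {set cell (sumn lam)}}) (c : cell (sumn lam)) : nat :=
  if (r == 1%N) && (c == (ord0, ord0)) then 1%N else
  match [pick k : 'I_m | c \in D (inord k.+1) :\: D (inord k)] with
  | Some k =>
      let second :=
        match [pick d in D (inord k.+1) :\: D (inord k) | d != c] with
        | Some d => (d.1 + d.2 < c.1 + c.2)%N   (* c is the right/lower cell *)
        | None => false
        end in
      (2 * k.+1 - 1 + r + second)%N
  | None => 0%N
  end.

Definition tab_of_dom (r m : nat) (lam : seq nat)
    (D : {ffun 'I_m.+1 -> {set cell (sumn lam)}}) : seq (seq nat) :=
  [seq [seq dom_entry r m lam D (inord i, inord j) | j <- iota 0 (nth 0 lam i)]
     | i <- iota 0 (size lam)].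

Definition sign_dom (r m : nat) (lam : seq nat)
    (D : {ffun 'I_m.+1 -> {set cell (sumn lam)}}) : int :=
  sign_word (sumn lam) (flatten (tab_of_dom r m lam D)).

(* Main.v *)
Require Import Defs.
From mathcomp Require Import all_boot all_order all_algebra all_fingroup.
From mathcomp Require Import zify.
Set Warnings "-notation-overridden".
Set Implicit Arguments. Unset Strict Implicit.
Import GRing.Theory Num.Theory.

Section P.
Variables (r n : nat) (lam : seq nat).
Hypothesis Hr : r <= 1.
Hypothesis Hn : 0 < n.
Hypothesis Hpart : is_partition lam.
Hypothesis HN : sumn lam = r + 2*n.

Local Notation N := (sumn lam).
Lemma N_gt0 : 0 < N. Proof. by rewrite HN; lia. Qed.
Definition x0 : 'I_N := Ordinal N_gt0.
Definition ordN (v : nat) : 'I_N := insubd x0 v.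
Lemma ordNK v : v < N -> ordN v = v :> nat.
Proof. by move=> h; rewrite val_insubd h. Qed.

Lemma nth_pword (s : 'S_N) p : p < N -> nth 0 (pword N s) p = (s (ordN p)).+1.
Proof.
move=> hp; rewrite /pword (nth_map x0) ?size_enum_ord //; congr (s _).+1.
by apply: val_inj; rewrite /= ordNK // nth_enum_ord.
Qed.

Lemma size_pword (s : 'S_N) : size (pword N s) = N.
Proof. by rewrite /pword size_map size_enum_ord. Qed.

Lemma lam_dec i i' : i <= i' -> nth 0 lam i' <= nth 0 lam i.
Proof.
move=> le; case: (ltnP i' (size lam)) => hi'; last by rewrite nth_default.
have := andP Hpart => -[hs _].
have tr : transitive geq by move=> a b c /=; lia.
have rf : reflexive geq by move=> a /=.
have := sorted_leq_nth tr rf 0 hs; move=> /(_ i i').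
rewrite !inE; apply=> //; lia.
Qed.

Lemma lam_pos i : i < size lam -> 0 < nth 0 lam i.
Proof.
move=> hi; have := andP Hpart => -[_ ha].
by move/allP: ha; apply; rewrite mem_nth.
Qed.

Lemma lam_le_N i : nth 0 lam i <= N.
Proof.
elim: lam i => [|a l IH] [|i] //=; first lia.
by have := IH i; lia.
Qed.

Lemma size_le_N : size lam <= N.
Proof.
have := andP Hpart => -[_]; elim: lam => [|a l IH] //= /andP[ha hl].
by have := IH hl; lia.
Qed.

Definition inl i j := j < nth 0 lam i.

Lemma inl_size i j : inl i j -> i < size lam.
Proof. by rewrite /inl; case: (ltnP i (size lam)) => // h; rewrite nth_default. Qed.

Lemma inl_down i j i' j' : inl i' j' -> i <= i' -> j <= j' -> inl i j.
Proof. by rewrite /inl => h1 h2 h3; have := lam_dec h2; lia. Qed.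

Lemma inl_N i j : inl i j -> i < N /\ j < N.
Proof.
move=> h; have := inl_size h; have := lam_le_N i; have := size_le_N.
rewrite /inl in h; lia.
Qed.

Definition E (s : 'S_N) i j := nth 0 (pword N s) (flatten_index lam i j).

Lemma E_perm s i j : inl i j -> E s i j = (s (ordN (flatten_index lam i j))).+1.
Proof. by move=> h; rewrite /E nth_pword // flatten_indexP. Qed.

Lemma E_range s i j : inl i j -> 0 < E s i j <= N.
Proof. by move=> h; rewrite E_perm //= ltn_ord. Qed.

Lemma E_inj s i j i' j' : inl i j -> inl i' j' -> E s i j = E s i' j' -> i = i' /\ j = j'.
Proof.
move=> h h'; rewrite !E_perm // => -[] /val_inj /perm_inj /(congr1 (@nat_of_ord _)).
rewrite !ordNK ?flatten_indexP // => e.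
have := flatten_indexKl h; have := flatten_indexKr h.
by rewrite e flatten_indexKl // flatten_indexKr.
Qed.

Lemma E_surj s v : 0 < v <= N -> exists i j, inl i j /\ E s i j = v.
Proof.
move=> hv; set p := (s^-1 (ordN v.-1))%g.
exists (reshape_index lam p), (reshape_offset lam p).
have hi : inl (reshape_index lam p) (reshape_offset lam p) by exact: reshape_offsetP.
split => //; rewrite E_perm // reshape_indexK.
have e : ordN p = p by apply/val_inj; rewrite /= ordNK.
by rewrite e /p permKV ordNK; lia.
Qed.

Definition stdE (s : 'S_N) :=
  (forall i j, inl i j.+1 -> E s i j < E s i j.+1) /\
  (forall i j, inl i.+1 j -> E s i j < E s i.+1 j).

Lemma row_entry s i j : inl i j ->
  nth 0 (nth [::] (reshape lam (pword N s)) i) j = E s i j.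
Proof. by move=> h; rewrite nth_reshape nth_take // nth_drop. Qed.

Lemma size_row s i : i < size lam -> size (nth [::] (reshape lam (pword N s)) i) = nth 0 lam i.
Proof.
move=> hi.
have := reshapeKl (sh := lam) (s := pword N s); rewrite size_pword leqnn => /(_ isT) e.
have := congr1 (fun l => nth 0 l i) e; rewrite /= /shape (nth_map [::]) //.
by rewrite size_reshape.
Qed.

Lemma std_iff s : is_standard lam (reshape lam (pword N s)) <-> stdE s.
Proof.
split.
- case/andP => h1 h2; split.
  + move=> i j hij.
    have hi := inl_size hij.
    have := allP h1 i; rewrite mem_iota add0n hi => /(_ isT) /(sortedP 0) /(_ j).
    rewrite size_row // !row_entry //; first (apply; exact hij).
    by apply: inl_down hij _ _; lia.
  + move=> i j hij.
    have hi := inl_size hij.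
    have := allP h2 i; rewrite mem_iota add0n => /(_ ltac:(lia)) /allP /(_ j).
    have hj : j \in iota 0 (nth 0 lam i.+1) by rewrite mem_iota add0n; exact hij.
    move=> /(_ hj).
    rewrite !row_entry //; apply: inl_down hij _ _; lia.
- case=> h1 h2; apply/andP; split.
  + apply/allP => i; rewrite mem_iota add0n => /= hi.
    apply/(sortedP 0) => j; rewrite size_row // => hj.
    by rewrite !row_entry //; [apply: h1 | apply: inl_down hj _ _; lia].
  + apply/allP => i _; apply/allP => j; rewrite mem_iota add0n /= => hj.
    rewrite !row_entry //; first exact: h2.
    by apply: inl_down hj _ _; lia.
Qed.

Lemma row_mono s i j d : stdE s -> inl i (j + d) -> E s i j <= E s i (j + d).
Proof.
move=> [h1 _]; elim: d => [|d IH] h; first by rewrite addn0.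
have h' : inl i (j + d) by apply: inl_down h _ _; lia.
have := IH h'; have := h1 i (j + d); rewrite -addnS => /(_ h); lia.
Qed.

Lemma col_mono s i j d : stdE s -> inl (i + d) j -> E s i j <= E s (i + d) j.
Proof.
move=> [_ h2]; elim: d => [|d IH] h; first by rewrite addn0.
have h' : inl (i + d) j by apply: inl_down h _ _; lia.
have := IH h'; have := h2 (i + d) j; rewrite -addnS => /(_ h); lia.
Qed.

Lemma E_mono s i j i' j' : stdE s -> inl i' j' -> i <= i' -> j <= j' -> E s i j <= E s i' j'.
Proof.
move=> hs h hi hj.
have h1 : inl i j' by apply: inl_down h _ _.
have := row_mono (d := j' - j) hs (i := i) (j := j); rewrite subnKC // => /(_ h1) e1.
have := col_mono (d := i' - i) hs (i := i) (j := j'); rewrite subnKC // => /(_ h) e2.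
lia.
Qed.

Lemma inl00 : inl 0 0.
Proof.
rewrite /inl; apply: lam_pos; have := N_gt0; case: lam => //.
Qed.

Lemma E00 s : stdE s -> E s 0 0 = 1.
Proof.
move=> hs; have [i [j [h e]]] := E_surj s (v := 1) ltac:(have := N_gt0; lia).
have := E_mono hs h (leq0n i) (leq0n j); have := E_range s inl00; lia.
Qed.

Definition Ec (s : 'S_N) (c : cell N) := E s c.1 c.2.

Lemma in_diag (c : cell N) : (c \in diag N lam) = inl c.1 c.2.
Proof. by rewrite inE. Qed.

Definition adjn (i j i' j' : nat) :=
  ((i == i') && ((j.+1 == j') || (j'.+1 == j))) ||
  ((j == j') && ((i.+1 == i') || (i'.+1 == i))).

Lemma adjacentE (c d : cell N) : adjacent N c d = adjn c.1 c.2 d.1 d.2.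
Proof. by []. Qed.

Lemma adjn_sym i j i' j' : adjn i j i' j' = adjn i' j' i j.
Proof. rewrite /adjn; apply/idP/idP; lia. Qed.

Definition pairok (s : 'S_N) (k : nat) : bool :=
  [forall c : cell N, forall d : cell N,
    ((c \in diag N lam) && (d \in diag N lam) && (Ec s c == r + 2 * k + 1)
     && (Ec s d == r + 2 * k + 2)) ==> adjacent N c d].

Definition Pok (s : 'S_N) : bool := [forall k : 'I_n, pairok s k].

Lemma pairok_ext s s' k :
  (forall c : cell N, c \in diag N lam ->
     ((Ec s' c == r + 2 * k + 1) = (Ec s c == r + 2 * k + 1)) /\
     ((Ec s' c == r + 2 * k + 2) = (Ec s c == r + 2 * k + 2))) ->
  pairok s' k = pairok s k.
Proof.
move=> H; apply: eq_forallb => c; apply: eq_forallb => d.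
case: (boolP (c \in diag N lam)) => hc; case: (boolP (d \in diag N lam)) => hd //=.
by have [-> _] := H c hc; have [_ ->] := H d hd.
Qed.

Lemma pairok_swap s s' k :
  (forall c : cell N, c \in diag N lam ->
     ((Ec s' c == r + 2 * k + 1) = (Ec s c == r + 2 * k + 2)) /\
     ((Ec s' c == r + 2 * k + 2) = (Ec s c == r + 2 * k + 1))) ->
  pairok s' k = pairok s k.
Proof.
move=> H; apply/idP/idP => /forallP h; apply/forallP => c; apply/forallP => d;
  apply/implyP => /andP[/andP[/andP[hc hd] e1] e2].
- have := forallP (h d) c; rewrite hc hd /=.
  have [-> _] := H d hd; have [_ ->] := H c hc; rewrite e1 e2 /=.
  by rewrite !adjacentE adjn_sym.
- have := forallP (h d) c; rewrite hc hd /=.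
  have [_ <-] := H d hd; have [<- _] := H c hc; rewrite e1 e2 /=.
  by rewrite !adjacentE adjn_sym.
Qed.

Lemma not_pairok s k : ~~ pairok s k -> exists i j i' j',
  [/\ inl i j, inl i' j', E s i j = r + 2 * k + 1, E s i' j' = r + 2 * k + 2 &
      ~~ adjn i j i' j'].
Proof.
rewrite /pairok negb_forall => /existsP[c]; rewrite negb_forall => /existsP[d].
rewrite negb_imply => /andP[/andP[/andP[/andP[hc hd] /eqP e1] /eqP e2] na].
by exists c.1, c.2, d.1, d.2; rewrite -!in_diag.
Qed.

Lemma pairokP s k i j i' j' : pairok s k -> inl i j -> inl i' j' ->
  E s i j = r + 2 * k + 1 -> E s i' j' = r + 2 * k + 2 -> adjn i j i' j'.
Proof.
move=> /forallP /(_ (inord i, inord j)) /forallP /(_ (inord i', inord j')).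
move=> h hij hij' e1 e2.
have [a1 a2] := inl_N hij; have [a3 a4] := inl_N hij'.
move: h; rewrite adjacentE /= !in_diag /Ec /= !inordK // ?hij ?hij' ?e1 ?e2 ?eqxx; try lia.
Qed.

Definition aN k : 'I_N := ordN (r + 2 * k).
Definition bN k : 'I_N := ordN (r + 2 * k + 1).
Definition sig k : 'S_N := tperm (aN k) (bN k).
Definition sw k v := if v == r + 2 * k + 1 then r + 2 * k + 2
                     else if v == r + 2 * k + 2 then r + 2 * k + 1 else v.

Lemma E_sig s k i j : k < n -> inl i j -> E (s * sig k) i j = sw k (E s i j).
Proof.
move=> hk h; rewrite !E_perm // permM; set x := s _.
have ha : aN k = r + 2 * k :> nat by rewrite ordNK // HN; lia.
have hb : bN k = r + 2 * k + 1 :> nat by rewrite ordNK // HN; lia.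
rewrite /sig; case: tpermP => [->|->|hx hy]; rewrite /sw ?ha ?hb.
- by case: eqP => ?; [lia|case: eqP => ?; lia].
- by case: eqP => ?; [lia|case: eqP => ?; lia].
- have h1 : (x : nat) != r + 2 * k by apply/eqP => e; apply: hx; apply: val_inj; rewrite /= e ha.
  have h2 : (x : nat) != r + 2 * k + 1 by apply/eqP => e; apply: hy; apply: val_inj; rewrite /= e hb.
  by case: eqP => ?; [lia|case: eqP => ?; lia].
Qed.

Lemma sw_lt k u v : u < v -> ~ (u = r + 2 * k + 1 /\ v = r + 2 * k + 2) ->
  sw k u < sw k v.
Proof.
move=> l nb; rewrite /sw.
case: eqP => e1; case: eqP => e2; try case: eqP => e3; try case: eqP => e4; lia.
Qed.

Lemma sig_lt s k i j i' j' : k < n -> ~~ pairok s k -> inl i j -> inl i' j' ->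
  adjn i j i' j' -> E s i j < E s i' j' -> E (s * sig k) i j < E (s * sig k) i' j'.
Proof.
move=> hk np h h' ad l; rewrite !E_sig //; apply: sw_lt => // -[e1 e2].
have [i0 [j0 [i1 [j1 [h0 h1 f1 f2 na]]]]] := not_pairok np.
have [e3 e4] := E_inj h0 h (etrans f1 (esym e1)).
have [e5 e6] := E_inj h1 h' (etrans f2 (esym e2)).
by move: na; rewrite e3 e4 e5 e6 ad.
Qed.

Lemma std_sig s k : k < n -> stdE s -> ~~ pairok s k -> stdE (s * sig k).
Proof.
move=> hk [h1 h2] np; split => i j h.
- apply: sig_lt => //; [apply: inl_down h _ _; lia | by rewrite /adjn !eqxx | exact: h1].
- apply: sig_lt => //; [apply: inl_down h _ _; lia | by rewrite /adjn !eqxx orbT | exact: h2].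
Qed.

Lemma pairok_sig s k k' : k < n -> pairok (s * sig k) k' = pairok s k'.
Proof.
move=> hk; case: (eqVneq k' k) => [->|ne].
- apply: pairok_swap => c; rewrite in_diag => hc; rewrite /Ec E_sig //.
  by rewrite /sw; split; repeat case: ifP => /eqP ?; apply/eqP/eqP; lia.
- apply: pairok_ext => c; rewrite in_diag => hc; rewrite /Ec E_sig //.
  by rewrite /sw; split; repeat case: ifP => /eqP ?; apply/eqP/eqP; lia.
Qed.

Lemma Pok_sig s k : k < n -> Pok (s * sig k) = Pok s.
Proof. by move=> hk; apply: eq_forallb => k'; rewrite pairok_sig. Qed.

Definition k0 s := find (fun k => ~~ pairok s k) (iota 0 n).

Lemma k0_sig s k : k < n -> k0 (s * sig k) = k0 s.
Proof. by move=> hk; apply: eq_find => k'; rewrite /= pairok_sig. Qed.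

Lemma k0P s : ~~ Pok s -> k0 s < n /\ ~~ pairok s (k0 s).
Proof.
rewrite /Pok negb_forall => /existsP[k nk].
have hh : has (fun k => ~~ pairok s k) (iota 0 n).
  by apply/hasP; exists (val k) => //; rewrite mem_iota /=.
have := hh; rewrite has_find size_iota => lt; split => //.
by have := nth_find 0 hh; rewrite nth_iota.
Qed.

Definition Qs s := is_standard lam (reshape lam (pword N s)) && ~~ Pok s.
Definition ivo (s : 'S_N) : 'S_N := if Qs s then (s * sig (k0 s))%g else s.

Lemma Q_sig s : Qs s -> Qs (s * sig (k0 s)).
Proof.
case/andP => /std_iff hs np; have [hk nk] := k0P np.
by rewrite /Qs Pok_sig // np andbT; apply/std_iff; apply: std_sig.
Qed.

Lemma ivoK s : ivo (ivo s) = s.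
Proof.
rewrite /ivo; case: (boolP (Qs s)) => q; last by rewrite (negbTE q).
have [hk _] := k0P (proj2 (andP q)).
rewrite Q_sig // k0_sig // -mulgA /sig.
have -> : (tperm (aN (k0 s)) (bN (k0 s)) * tperm (aN (k0 s)) (bN (k0 s)) = 1)%g.
  by apply/permP => x; rewrite permM tpermK perm1.
by rewrite mulg1.
Qed.

Lemma Q_ivo s : Qs (ivo s) = Qs s.
Proof.
rewrite /ivo; case: (boolP (Qs s)) => q; last by rewrite (negbTE q).
by rewrite Q_sig.
Qed.

Lemma odd_ivo s : Qs s -> odd_perm (ivo s) = ~~ odd_perm s.
Proof.
move=> q; rewrite /ivo q odd_permM odd_tperm.
have [hk _] := k0P (proj2 (andP q)).
have -> : aN (k0 s) != bN (k0 s).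
  apply/eqP => /(congr1 (@nat_of_ord _)); rewrite !ordNK ?HN; lia.
by rewrite addbT.
Qed.

Lemma sum_Q : (\sum_(s | Qs s) (-1) ^+ odd_perm s = 0 :> int)%R.
Proof.
set S := (\sum_(s | Qs s) _)%R.
have e : S = (- S)%R.
  rewrite {1}/S (reindex_inj (can_inj ivoK)) /= -sumrN.
  apply: eq_big => s; first by rewrite Q_ivo.
  move=> q; rewrite odd_ivo; last by rewrite -Q_ivo.
  by case: (odd_perm s); rewrite /= ?expr0 ?expr1 ?opprK.
by apply/eqP; move/eqP: e; rewrite -addr_eq0 -mulr2n mulrn_eq0.
Qed.

Lemma cell_eq (c : cell N) i j : i <= N -> j <= N ->
  (c == (inord i, inord j)) = ((c.1 == i :> nat) && (c.2 == j :> nat)).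
Proof. by move=> hi hj; case: c => a b; rewrite xpair_eqE -!val_eqE /= !inordK. Qed.

Lemma Ec_inord s i j : i <= N -> j <= N -> Ec s (inord i, inord j) = E s i j.
Proof. by move=> hi hj; rewrite /Ec /= !inordK. Qed.

Lemma in_diag_inord i j : i <= N -> j <= N -> ((inord i, inord j) \in diag N lam) = inl i j.
Proof. by move=> hi hj; rewrite in_diag /= !inordK. Qed.

Definition Dof (s : 'S_N) : {ffun 'I_n.+1 -> {set cell N}} :=
  [ffun k : 'I_n.+1 => [set c : cell N | (c \in diag N lam) && (Ec s c <= r + 2 * k)]].

Lemma diff_Dof s k : k < n ->
  Dof s (inord k.+1) :\: Dof s (inord k) =
  [set c : cell N | (c \in diag N lam) && (r + 2 * k < Ec s c <= r + 2 * k + 2)].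
Proof.
move=> hk; apply/setP => c; rewrite !inE !ffunE !inE !inordK; try lia.
Qed.

Lemma Dof_domino s (k : nat) : Pok s -> k < n ->
  is_domino N (Dof s (inord k.+1) :\: Dof s (inord k)).
Proof.
move=> hp hk; rewrite diff_Dof //.
have hv1 : 0 < r + 2 * k + 1 <= N by rewrite HN; lia.
have hv2 : 0 < r + 2 * k + 2 <= N by rewrite HN; lia.
have [i1 [j1 [h1 e1]]] := E_surj s hv1.
have [i2 [j2 [h2 e2]]] := E_surj s hv2.
have hk' : k < n by [].
have ad := pairokP (forallP hp (Ordinal hk')) h1 h2 e1 e2.
have [a1 a2] := inl_N h1; have [a3 a4] := inl_N h2.
have b1 := ltnW a1; have b2 := ltnW a2; have b3 := ltnW a3; have b4 := ltnW a4.
apply/existsP; exists (inord i1, inord j1); apply/existsP; exists (inord i2, inord j2).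
apply/andP; split.
  by rewrite adjacentE /= !inordK.
apply/eqP/setP => c; rewrite !inE !cell_eq //.
apply/idP/idP.
- case/andP => hc /andP[l1 l2]; rewrite /Ec in l1 l2.
  have [e|e] : E s c.1 c.2 = E s i1 j1 \/ E s c.1 c.2 = E s i2 j2.
  + rewrite e1 e2; case: (ltnP (E s c.1 c.2) (r + 2 * k + 2)) => l3.
    * by left; move: (E s c.1 c.2) l1 l3 => x; lia.
    * by right; move: (E s c.1 c.2) l2 l3 => x; lia.
  + by have [-> ->] := E_inj hc h1 e; rewrite !eqxx.
  + by have [-> ->] := E_inj hc h2 e; rewrite !eqxx orbT.
- case/orP => /andP[/eqP e3 /eqP e4]; rewrite /Ec e3 e4 -[_ < nth 0 lam _]/(inl _ _).
  + rewrite h1 e1 /=; apply/andP; split; lia.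
  + rewrite h2 e2 /=; apply/andP; split; lia.
Qed.

Lemma Dof_tab s : stdE s -> Pok s -> is_domino_tab r n lam (Dof s).
Proof.
move=> hs hp; rewrite /is_domino_tab.
apply/andP; split; first (apply/andP; split; first (apply/andP; split)).
- apply/forallP => k; apply/forallP => c; apply/implyP; rewrite ffunE inE.
  case/andP; rewrite in_diag => hc hk; apply/forallP => d; apply/implyP => /andP[h1 h2].
  rewrite inE in_diag.
  have hd := inl_down hc h1 h2; rewrite hd /=.
  by have := E_mono hs hc h1 h2; rewrite /Ec in hk *; lia.
- apply/eqP/setP => c; rewrite ffunE !inE /= muln0 addn0 -[_ < nth 0 lam _]/(inl _ _).
  have : r = 0 \/ r = 1 by lia.
  case=> er; rewrite /delta er /=.
  + by rewrite nth_nil ltn0; have := E_range s (i := c.1) (j := c.2); case: (inl _ _) => //= /(_ isT); rewrite /Ec; lia.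
  + case: (boolP (inl c.1 c.2)) => hc /=.
    * apply/idP/idP => h.
      - have ee : E s c.1 c.2 = E s 0 0.
          rewrite E00 //; have := E_range s hc; rewrite /Ec in h.
          by case/andP => a _; apply/eqP; rewrite eqn_leq h a.
        have [-> ->] := E_inj hc inl00 ee; by [].
      - have h0 : (c.1 : nat) = 0 by move: h; case: (c.1 : nat) => // -[].
        have h1 : (c.2 : nat) = 0 by move: h; rewrite h0 /=; lia.
        by rewrite /Ec h0 h1 E00.
    * apply/esym/negbTE; apply: contra hc => h'.
      have h0 : (c.1 : nat) = 0 by move: h'; case: (c.1 : nat) => // -[].
      have h1 : (c.2 : nat) = 0 by move: h'; rewrite h0 /=; lia.
      by rewrite /inl h0 h1; exact: inl00.
- apply/eqP/setP => c; rewrite ffunE !inE /= -[_ < nth 0 lam _]/(inl _ _).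
  case: (boolP (inl c.1 c.2)) => h //=.
  have := E_range s h; rewrite /Ec -HN => /andP[_ a]; exact: a.
- apply/forallP => k.
  have hk : k < n := ltn_ord k.
  apply/andP; split.
  + apply/subsetP => c; rewrite !ffunE !inE !inordK; try lia.
  + exact: Dof_domino.
Qed.


Section Tab.
Variable D : {ffun 'I_n.+1 -> {set cell N}}.
Hypothesis HD : is_domino_tab r n lam D.

Definition Dk (k : nat) := D (inord k).
Definition Diff (k : nat) := Dk k.+1 :\: Dk k.
Definition core (c : cell N) := (r == 1) && (c == (ord0, ord0)).
Local Notation de := (dom_entry r n lam D).

Lemma T_young k : young N (Dk k).
Proof. by case/andP: HD => /andP[/andP[/forallP h _] _] _; apply: h. Qed.

Lemma T_0 : Dk 0 = diag N (delta r).
Proof.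
case/andP: HD => /andP[/andP[_ /eqP h] _] _; rewrite -h /Dk; congr (D _).
by apply: val_inj; rewrite /= inordK.
Qed.

Lemma T_n : Dk n = diag N lam.
Proof.
case/andP: HD => /andP[_ /eqP h] _; rewrite -h /Dk; congr (D _).
by apply: val_inj; rewrite /= inordK.
Qed.

Lemma T_step k : k < n -> Dk k \subset Dk k.+1 /\ is_domino N (Diff k).
Proof.
move=> hk; case/andP: HD => _ /forallP /(_ (Ordinal hk)) /andP[h1 h2].
by split.
Qed.

Lemma T_mono j k : j <= k -> k <= n -> Dk j \subset Dk k.
Proof.
move=> hjk; elim: k hjk => [|k IH] hjk hk.
  by have -> : j = 0 by lia.
case: (eqVneq j k.+1) => [-> //|ne].
apply: subset_trans (IH _ _) (proj1 (T_step _)); lia.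
Qed.

Lemma T_diag k c : k <= n -> c \in Dk k -> c \in diag N lam.
Proof. by move=> hk; rewrite -T_n; apply/subsetP/T_mono. Qed.

Lemma Dk0P c : (c \in Dk 0) = core c.
Proof.
rewrite T_0 /core inE; have : r = 0 \/ r = 1 by lia.
case=> -> /=; first by rewrite nth_nil.
case: c => a b; rewrite xpair_eqE -!val_eqE /=.
by case: (a : nat) => [|[]] //=; case: (b : nat).
Qed.

Lemma core_Dk c k : core c -> k <= n -> c \in Dk k.
Proof. by move=> h hk; apply: (subsetP (T_mono (leq0n k) hk)); rewrite Dk0P. Qed.

Lemma lvl c : c \in diag N lam -> ~~ core c -> exists k, k < n /\ c \in Diff k.
Proof.
move=> hc nc.
have ex : exists m, c \in Dk m by exists n; rewrite T_n.
case: (ex_minnP ex) => m hm mmin.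
have mn : m <= n by apply: mmin; rewrite T_n.
have m0 : m != 0 by apply: contraNneq nc => e; rewrite -Dk0P -e.
exists m.-1; split; first lia.
rewrite /Diff inE prednK ?lt0n // hm andbT.
by apply/negP => /mmin; lia.
Qed.

Lemma Diff_uniq c k k' : k < n -> k' < n -> c \in Diff k -> c \in Diff k' -> k = k'.
Proof.
move=> hk hk'; rewrite !inE => /andP[n1 i1] /andP[n2 i2].
case: (ltngtP k k') => // l.
- by move: n2; rewrite (subsetP (T_mono l _) _ i1) //; lia.
- by move: n1; rewrite (subsetP (T_mono l _) _ i2) //; lia.
Qed.

Lemma adjn_irr i j : adjn i j i j = false.
Proof. by rewrite /adjn; apply/negbTE; lia. Qed.

Lemma partner c k : k < n -> c \in Diff k -> exists d,
  [/\ d \in Diff k, d != c, adjacent N c d & forall e, e \in Diff k -> e = c \/ e = d].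
Proof.
move=> hk hc; have [_ /existsP[x /existsP[y /andP[ad /eqP e]]]] := T_step hk.
have hxy : x != y by apply: contraTneq ad => ->; rewrite adjacentE adjn_irr.
move: hc; rewrite e !inE => /orP[] /eqP ->.
- exists y; split => //; first by rewrite !inE eqxx orbT.
  + by rewrite eq_sym.
  + by move=> z; rewrite !inE => /orP[] /eqP ->; [left|right].
- exists x; split => //; first by rewrite !inE eqxx.
  + by rewrite adjacentE adjn_sym -adjacentE.
  + by move=> z; rewrite !inE => /orP[] /eqP ->; [right|left].
Qed.

Lemma core_de c : core c -> de c = 1.
Proof. by rewrite /dom_entry /core => ->. Qed.

Lemma L1 c d k : k < n -> c \in Diff k -> d \in Diff k -> d != c ->
  de c = r + 2 * k + 1 + (d.1 + d.2 < c.1 + c.2).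
Proof.
move=> hk hc hd ne.
have nc : core c = false.
  apply/negbTE/negP => /core_Dk /(_ (ltnW hk)); move: hc; rewrite inE => /andP[h _].
  by rewrite (negbTE h).
rewrite /dom_entry; move: nc; rewrite /core => ->.
case: pickP => [k' hk' | none]; last by have := none (Ordinal hk); rewrite /= -/(Dk _) -/(Dk _) -/(Diff _) hc.
have ek : k' = k :> nat by apply: (Diff_uniq (ltn_ord k') hk hk' hc).
rewrite ek; case: pickP => [d' /andP[hd' ne'] | none2]; last first.
  by have := none2 d; rewrite -[_ :\: _]/(Diff k) hd ne.
have [d0 [_ _ _ uq]] := partner hk hc.
have ed : d' = d.
  move: hd'; rewrite -[_ :\: _]/(Diff k) => hd'.
  case: (uq _ hd') => e1; first by rewrite e1 eqxx in ne'.
  by case: (uq _ hd) => e2; [rewrite e2 eqxx in ne|rewrite e1 e2].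
rewrite ed; move: (_ < _) => b; case: b => /=; lia.
Qed.

Lemma de_info c : c \in diag N lam -> ~~ core c -> exists k d,
  [/\ k < n, c \in Diff k, forall e, e \in Diff k -> e = c \/ e = d,
      (d \in Diff k) && (d != c) &
      de c = r + 2 * k + 1 + (d.1 + d.2 < c.1 + c.2)].
Proof.
move=> hc nc; have [k [hk hck]] := lvl hc nc.
have [d [hd ne ad uq]] := partner hk hck.
by exists k, d; split => //; [rewrite hd ne | apply: L1].
Qed.

Lemma de_adj c k d : k < n -> c \in Diff k -> d \in Diff k -> d != c -> adjacent N c d.
Proof.
move=> hk hc hd ne; have [d0 [hd0 ne0 ad0 uq0]] := partner hk hc.
by case: (uq0 _ hd) => e0; [rewrite e0 eqxx in ne|rewrite e0].
Qed.

Lemma adj_sum (c d : cell N) : adjacent N c d -> c.1 + c.2 != d.1 + d.2 :> nat.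
Proof. by rewrite adjacentE /adjn; lia. Qed.

Lemma core_eq c : core c -> c = (ord0, ord0).
Proof. by case/andP => _ /eqP. Qed.

Lemma core_r c : core c -> r = 1.
Proof. by case/andP => /eqP. Qed.

Lemma mem_Dk c k : c \in diag N lam -> k <= n -> (c \in Dk k) = (de c <= r + 2 * k).
Proof.
move=> hc hkn; case: (boolP (core c)) => cc.
  by rewrite core_Dk // core_de //; have := core_r cc; lia.
have [k0 [d [hk0 hck uq _ ->]]] := de_info hc cc.
have := leq_b1 (d.1 + d.2 < c.1 + c.2); move: (nat_of_bool _) => b hb.
case: (ltnP k0 k) => l.
- apply/esym; have -> : c \in Dk k by apply: (subsetP (T_mono l hkn)); move: hck; rewrite inE => /andP[].
  apply/idP; lia.
- apply/esym; have -> : c \in Dk k = false.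
    apply/negP => h; move: hck; rewrite inE (subsetP (T_mono l (ltnW hk0)) _ h) //.
  apply/negbTE/negP; lia.
Qed.

Lemma de_range c : c \in diag N lam -> 0 < de c <= N.
Proof.
move=> hc; case: (boolP (core c)) => cc.
  by rewrite core_de //; have := N_gt0; lia.
have [k0 [d [hk0 hck uq _ ->]]] := de_info hc cc.
have := leq_b1 (d.1 + d.2 < c.1 + c.2); move: (nat_of_bool _) => b hb.
by rewrite HN; lia.
Qed.

Lemma de_ge c : c \in diag N lam -> ~~ core c -> r + 1 <= de c.
Proof.
move=> hc cc; have [k0 [d [hk0 hck uq _ ->]]] := de_info hc cc.
lia.
Qed.

Lemma de_inj c c' : c \in diag N lam -> c' \in diag N lam -> de c = de c' -> c = c'.
Proof.
move=> hc hc' e.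
case: (boolP (core c)) => cc; case: (boolP (core c')) => cc'.
- by rewrite (core_eq cc) (core_eq cc').
- by have := de_ge hc' cc'; rewrite -e core_de // (core_r cc); lia.
- by have := de_ge hc cc; rewrite e core_de // (core_r cc'); lia.
have [k [d [hk hck uq /andP[hd ne] ev]]] := de_info hc cc.
have [k' [d' [hk' hck' uq' /andP[hd' ne'] ev']]] := de_info hc' cc'.
have adc := de_adj hk hck hd ne.
move: e; rewrite ev ev' => e.
have l1 := leq_b1 (d.1 + d.2 < c.1 + c.2).
have l2 := leq_b1 (d'.1 + d'.2 < c'.1 + c'.2).
have [kk bb] : k = k' /\ (d.1 + d.2 < c.1 + c.2) = (d'.1 + d'.2 < c'.1 + c'.2).
  move: e; case: (d.1 + d.2 < c.1 + c.2); case: (d'.1 + d'.2 < c'.1 + c'.2) => /= e;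
    split => //; clear -e; try lia; exfalso; lia.
subst k'.
case: (eqVneq c c') => // ne2.
case: (uq _ hck') => e2; first by rewrite e2 eqxx in ne2.
case: (uq' _ hck) => e3; first by rewrite e3 eqxx in ne2.
have sne := adj_sum adc.
move: bb sne; rewrite -e2 -e3.
by case: ltngtP.
Qed.


Lemma de_lt c c' : c \in diag N lam -> c' \in diag N lam -> c != c' ->
  c.1 <= c'.1 -> c.2 <= c'.2 -> ~~ core c' -> de c < de c'.
Proof.
move=> hc hc' ne l1 l2 cc'.
have ge' := de_ge hc' cc'.
case: (boolP (core c)) => cc.
  by rewrite core_de //; move: ge'; rewrite (core_r cc).
have [k [d [hk hck uq /andP[hd nd] ev]]] := de_info hc cc.
have [k' [d' [hk' hck' uq' /andP[hd' nd'] ev']]] := de_info hc' cc'.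
have cin : c \in Dk k'.+1.
  have := T_young k'.+1; move/forallP/(_ c')/implyP.
  move: hck'; rewrite inE => /andP[_ ->] /(_ isT) /forallP /(_ c) /implyP; apply.
  by rewrite l1 l2.
have kk : k <= k'.
  case: (leqP k k') => // l.
  move: hck; rewrite inE (subsetP (T_mono l (ltnW hk)) _ cin) //.
rewrite ev ev'.
have b1 := leq_b1 (d.1 + d.2 < c.1 + c.2).
have b2 := leq_b1 (d'.1 + d'.2 < c'.1 + c'.2).
case: (ltnP k k') => kk'.
  move: b1 b2 kk'; clear; move: (nat_of_bool _) (nat_of_bool _) => x y; lia.
have ek : k' = k by apply/eqP; rewrite eqn_leq kk' kk.
subst k'.
case: (uq _ hck') => e2; first by rewrite e2 eqxx in ne.
case: (uq' _ hck) => e3; first by rewrite e3 eqxx in ne.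
rewrite -e2 -e3.
have lt : c.1 + c.2 < c'.1 + c'.2.
  have : (c.1 != c'.1 :> nat) || (c.2 != c'.2 :> nat)
    by move: ne; rewrite -pair_eqE /pair_eq negb_and.
  move: l1 l2; clear; lia.
have -> : (c'.1 + c'.2 < c.1 + c.2) = false by apply/negbTE; rewrite -leqNgt ltnW.
by rewrite lt /nat_of_bool; clear; lia.
Qed.

Definition F (i j : nat) := de (inord i, inord j).

Lemma F_row i j : inl i j.+1 -> F i j < F i j.+1.
Proof.
move=> h; have [a1 a2] := inl_N h.
have h0 : inl i j by apply: inl_down h _ _.
have b1 : i <= N by lia.
have b2 : j <= N by lia.
have b3 : j.+1 <= N by lia.
apply: de_lt.
- by rewrite in_diag_inord.
- by rewrite in_diag_inord.
- by rewrite -pair_eqE /pair_eq /= negb_and -!val_eqE /= !inordK // orbC neq_ltn ltnSn.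
- by rewrite /= !inordK.
- by rewrite /= !inordK.
- rewrite /core; apply/negP => /andP[_ /eqP /(congr1 (fun x => nat_of_ord x.2))].
  by rewrite /= inordK.
Qed.

Lemma F_col i j : inl i.+1 j -> F i j < F i.+1 j.
Proof.
move=> h; have [a1 a2] := inl_N h.
have h0 : inl i j by apply: inl_down h _ _.
have b1 : i <= N by lia.
have b2 : j <= N by lia.
have b3 : i.+1 <= N by lia.
apply: de_lt.
- by rewrite in_diag_inord.
- by rewrite in_diag_inord.
- by rewrite -pair_eqE /pair_eq /= negb_and -!val_eqE /= !inordK // neq_ltn ltnSn.
- by rewrite /= !inordK.
- by rewrite /= !inordK.
- rewrite /core; apply/negP => /andP[_ /eqP /(congr1 (fun x => nat_of_ord x.1))].
  by rewrite /= inordK.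
Qed.

Definition cellof (p : nat) : cell N := (inord (reshape_index lam p), inord (reshape_offset lam p)).

Lemma cellof_diag p : p < N -> cellof p \in diag N lam.
Proof.
move=> hp; have h : inl (reshape_index lam p) (reshape_offset lam p) by exact: reshape_offsetP.
have [a1 a2] := inl_N h; by rewrite in_diag_inord //; lia.
Qed.

Definition gD (p : 'I_N) : 'I_N := ordN (de (cellof p)).-1.

Lemma gD_inj : injective gD.
Proof.
move=> p q /(congr1 (@nat_of_ord _)).
have hp := cellof_diag (ltn_ord p); have hq := cellof_diag (ltn_ord q).
have := de_range hp; have := de_range hq => r2 r1.
rewrite /gD !ordNK; try lia.
move=> e; have e' : de (cellof p) = de (cellof q) by lia.
have := de_inj hp hq e' => /(congr1 (fun c : cell N => (nat_of_ord c.1, nat_of_ord c.2))).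
have h1 : inl (reshape_index lam p) (reshape_offset lam p) by exact: reshape_offsetP.
have h2 : inl (reshape_index lam q) (reshape_offset lam q) by exact: reshape_offsetP.
have [a1 a2] := inl_N h1; have [a3 a4] := inl_N h2.
rewrite /= !inordK; try lia.
case=> e1 e2; apply: ord_inj.
by rewrite -(reshape_indexK lam p) -(reshape_indexK lam q) e1 e2.
Qed.

Definition sD : 'S_N := perm gD_inj.

Lemma E_sD i j : inl i j -> E sD i j = F i j.
Proof.
move=> h; have fP := flatten_indexP h.
rewrite E_perm // permE /gD /cellof (ordNK fP) flatten_indexKl // flatten_indexKr //.
have [a1 a2] := inl_N h.
have hr : 0 < F i j <= N by apply: de_range; rewrite in_diag_inord //; lia.
rewrite ordNK -/(F i j); last lia.
move: hr; clear; move: (F i j) => x; lia.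
Qed.

Lemma sD_std : stdE sD.
Proof.
split => i j h.
- rewrite !E_sD; [exact: F_row | exact: h | apply: inl_down h _ _; lia].
- rewrite !E_sD; [exact: F_col | exact: h | apply: inl_down h _ _; lia].
Qed.

Lemma Ec_sD c : c \in diag N lam -> Ec sD c = de c.
Proof.
rewrite in_diag => h; rewrite /Ec E_sD // /F.
by case: c h => a b h /=; rewrite !inord_val.
Qed.

Lemma Dk_val (k : 'I_n.+1) : Dk k = D k.
Proof. by rewrite /Dk inord_val. Qed.

Lemma Dof_sD : Dof sD = D.
Proof.
apply/ffunP => k; apply/setP => c; rewrite ffunE inE.
case: (boolP (c \in diag N lam)) => hc /=.
- by rewrite Ec_sD // -mem_Dk // ?Dk_val // -ltnS ltn_ord.
- apply/esym/negP => h; apply: (negP hc); apply: (T_diag (k := k)); first by rewrite -ltnS ltn_ord.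
  by rewrite Dk_val.
Qed.

Lemma Pok_sD : Pok sD.
Proof.
apply/forallP => k; apply/forallP => c; apply/forallP => d; apply/implyP.
case/andP => /andP[/andP[hc hd] e1] e2.
rewrite !Ec_sD // in e1 e2.
have hk := ltn_ord k.
have inD x : x \in diag N lam -> (de x == r + 2 * k + 1) || (de x == r + 2 * k + 2) -> x \in Diff k.
  move=> hx hv; rewrite inE !mem_Dk //; lia.
have ne : d != c by apply: contraTneq e2 => ->; rewrite (eqP e1); lia.
apply: (de_adj hk); [by apply: inD => //; rewrite e1 | by apply: inD => //; rewrite e2 orbT | exact: ne].
Qed.

End Tab.

Lemma adj_lt s i j i' j' : stdE s -> inl i j -> inl i' j' -> adjn i j i' j' ->
  (E s i j < E s i' j') = (i + j < i' + j').
Proof.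
move=> [h1 h2] hij hij'; rewrite /adjn.
case/orP => /andP[/eqP ei /orP[] /eqP ej]; rewrite -?ei -?ej in hij hij' *.
- by rewrite h1 // addnS ltnSn.
- have l := h1 _ _ hij; apply/idP/idP => H; move: H l; clear; lia.
- by rewrite h2 // addSn ltnSn.
- have l := h2 _ _ hij; apply/idP/idP => H; move: H l; clear; lia.
Qed.


Lemma K s c : stdE s -> Pok s -> c \in diag N lam -> dom_entry r n lam (Dof s) c = Ec s c.
Proof.
move=> hs hp hc; have HD := Dof_tab hs hp.
case: (boolP (core c)) => cc.
  rewrite (core_de (Dof s) cc) (core_eq cc) /Ec /=.
  by rewrite E00.
have [k [d [hk hck uq /andP[hd nd] ev]]] := de_info HD hc cc.
rewrite ev.
have ad := de_adj HD hk hck hd nd.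
have sne := adj_sum HD ad.
move: hck hd; rewrite /Diff /Dk diff_Dof // !inE => /andP[hc' b1] /andP[hd' b2].
have al := adj_lt hs hc' hd' ad.
have neE : Ec s c != Ec s d.
  apply: contra nd => /eqP e; have [e1 e2] := E_inj hc' hd' e.
  by rewrite -pair_eqE /pair_eq /= -!val_eqE /= e1 e2 !eqxx.
move: b1 b2 neE sne al; rewrite /Ec.
move: (E s c.1 c.2) (E s d.1 d.2) => x y.
case: (ltngtP (d.1 + d.2) (c.1 + c.2)) => l //= b1 b2 neE _ al.
- by move/negbT: al; move: b1 b2 neE; clear; lia.
- by move: al b1 b2 neE; clear; lia.
Qed.

Lemma E_ext s s' : (forall i j, inl i j -> E s i j = E s' i j) -> s = s'.
Proof.
move=> H; apply/permP => x.
have h : inl (reshape_index lam x) (reshape_offset lam x) by exact: reshape_offsetP.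
have := H _ _ h; rewrite !E_perm // reshape_indexK.
have -> : ordN x = x by apply: ord_inj; rewrite ordNK.
by case; apply: ord_inj.
Qed.

Lemma shape_tab D : shape (tab_of_dom r n lam D) = lam.
Proof.
rewrite /shape /tab_of_dom -map_comp.
have -> : [seq (size \o (fun i => [seq dom_entry r n lam D (inord i, inord j) | j <- iota 0 (nth 0 lam i)])) i
          | i <- iota 0 (size lam)] = [seq nth 0 lam i | i <- iota 0 (size lam)].
  by apply: eq_map => i; rewrite /= size_map size_iota.
exact: mkseq_nth.
Qed.

Lemma flat_tab D s : (forall i j, inl i j -> dom_entry r n lam D (inord i, inord j) = E s i j) ->
  flatten (tab_of_dom r n lam D) = pword N s.
Proof.
move=> H; apply: (eq_from_nth (x0 := 0)).
  by rewrite size_flatten shape_tab size_pword.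
move=> p; rewrite size_flatten shape_tab => hp.
rewrite nth_flatten shape_tab.
have hij : inl (reshape_index lam p) (reshape_offset lam p) := reshape_offsetP hp.
have hi := inl_size hij.
rewrite /tab_of_dom (nth_map 0) ?size_iota // nth_iota // add0n.
rewrite (nth_map 0) ?size_iota // nth_iota // add0n.
by rewrite H // /E reshape_indexK.
Qed.

Lemma sign_pword s : sign_word N (pword N s) = ((-1) ^+ odd_perm s : int)%R.
Proof.
rewrite /sign_word; case: pickP => [s' /eqP e | none]; last by have := none s; rewrite eqxx.
have -> // : s' = s.
by apply: E_ext => i j h; rewrite /E e.
Qed.

Definition hinv (D : {ffun 'I_n.+1 -> {set cell N}}) : 'S_N :=
  odflt 1%g [pick s | is_standard lam (reshape lam (pword N s)) && Pok s && (Dof s == D)].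

Lemma K_E s i j : stdE s -> Pok s -> inl i j -> dom_entry r n lam (Dof s) (inord i, inord j) = E s i j.
Proof.
move=> hs hp h; have [a1 a2] := inl_N h.
rewrite K // ?Ec_inord // ?in_diag_inord //; lia.
Qed.

Lemma main : I_lam lam = (\sum_(D | is_domino_tab r n lam D) sign_dom r n lam D)%R.
Proof.
rewrite /I_lam (bigID Pok) /=.
rewrite [X in (_ + X)%R]sum_Q addr0.
rewrite (reindex_onto Dof hinv).
  apply: eq_big => s.
  - apply/idP/idP.
    + case/andP => hst hp; have hs := (std_iff s).1 hst.
      rewrite Dof_tab //=.
      rewrite /hinv; case: pickP => [s0 /andP[/andP[hst0 hp0] /eqP e] | none] /=.
      * apply/eqP; apply: E_ext => i j h.
        have hs0 := (std_iff s0).1 hst0.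
        by rewrite -K_E // e K_E.
      * by have := none s; rewrite hst hp eqxx.
    + case/andP => ht /eqP; rewrite /hinv; case: pickP => [s0 /andP[/andP[hst0 hp0] _] /= <- | none /= e].
      * by rewrite hst0 hp0.
      * have := none (sD ht); rewrite Pok_sD Dof_sD eqxx andbT andbT.
        by rewrite ((std_iff _).2 (sD_std ht)).
  - case/andP => hst hp; have hs := (std_iff s).1 hst.
    rewrite /sign_dom (@flat_tab _ s) ?sign_pword //.
    by move=> i j h; apply: K_E.
move=> D hD; rewrite /hinv; case: pickP => [s /andP[_ /eqP e] | none] //=.
have := none (sD hD); rewrite Pok_sD Dof_sD eqxx andbT andbT.
by rewrite ((std_iff _).2 (sD_std hD)).
Qed.

End P.

Theorem proposition4p1 (r n : nat) (lam : seq nat) :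
  (r <= 1)%N -> (1 <= n)%N -> in_Pr r n lam ->
  I_lam lam =
  (\sum_(D : {ffun 'I_n.+1 -> {set cell (sumn lam)}} | is_domino_tab r n lam D)
     sign_dom r n lam D)%R.
Proof.
move=> Hr Hn [Hpart [_ HN0]].
have HN : sumn lam = r + 2 * n.
  by rewrite HN0; congr (_ + _); rewrite /delta; case: (r) Hr => [|[|]].
exact: main.
Qed.
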